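(* Let \(a,b,c\) be positive integers, \(m\) a positive integer that is not a perfect square, with \(\gcd(am,b^2-c^2m)=1\), and let \(A,B\in\mathbb Z\). Then there is a unique \((\bar x,\bar y,\bar z,\bar w)\in\mathbb Z^4\) with \(0\leq\bar z<am\) and \(0\leq\bar w<a\) satisfying \(a\sqrt m(\bar x+\bar y\sqrt m)+(b+c\sqrt m)(\bar z+\bar w\sqrt m)=A+B\sqrt m\). *)

(* Defs.v *)
From Stdlib Require Export Reals ZArith.
Open Scope R_scope.

Definition is_square (m : Z) : Prop := exists k : Z, (k * k)%Z = m.

Definition rep_eq (a b c m A B x y z w : Z) : Prop :=
  IZR a * sqrt (IZR m) * (IZR x + IZR y * sqrt (IZR m))
  + (IZR b + IZR c * sqrt (IZR m)) * (IZR z + IZR w * sqrt (IZR m))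
  = IZR A + IZR B * sqrt (IZR m).

(* Main.v *)
Require Import Defs.
From Stdlib Require Import Reals ZArith Lia Lra Znumtheory.
Open Scope R_scope.

Lemma descent (m : Z) : (0 < m)%Z -> ~ is_square m ->
  forall n : nat, forall P Q : Z, (0 < Q)%Z -> (Q <= Z.of_nat n)%Z ->
  (m * (Q * Q) <> P * P)%Z.
Proof.
  intros hm hsq n; induction n as [|n IH]; intros P Q HQ HQn E; [lia|].
  destruct (Z.sqrt_spec m) as [Hk1 Hk2]; [lia|].
  pose proof (Z.sqrt_nonneg m) as Hk0.
  set (k := Z.sqrt m) in *.
  assert (Hkm : (k * k <> m)%Z) by (intro H; apply hsq; exists k; exact H).
  assert (Hk1' : (k * k < m)%Z) by lia.
  assert (HP : exists P0, (0 <= P0)%Z /\ (P0 * P0 = P * P)%Z).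
  { destruct (Z.le_ge_cases 0 P); [exists P | exists (- P)%Z]; split; try lia; ring. }
  destruct HP as [P0 [HP0 EP]]. rewrite <- EP in E. clear EP P.
  assert (L1 : (k * Q < P0)%Z).
  { destruct (Z.lt_ge_cases (k*Q) P0) as [h|h]; [exact h|].
    assert (P0 * P0 <= (k*Q)*(k*Q))%Z by (apply Z.mul_le_mono_nonneg; lia).
    assert (k*k*(Q*Q) < m*(Q*Q))%Z by (apply Z.mul_lt_mono_pos_r; nia).
    nia. }
  assert (L2 : (P0 < Z.succ k * Q)%Z).
  { destruct (Z.lt_ge_cases P0 (Z.succ k*Q)) as [h|h]; [exact h|].
    assert ((Z.succ k*Q)*(Z.succ k*Q) <= P0 * P0)%Z by (apply Z.mul_le_mono_nonneg; lia).
    assert (m*(Q*Q) < Z.succ k * Z.succ k*(Q*Q))%Z by (apply Z.mul_lt_mono_pos_r; nia).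
    nia. }
  apply (IH (m * Q - k * P0)%Z (P0 - k * Q)%Z); [lia | lia |].
  assert (Hid : (m * ((P0 - k*Q) * (P0 - k*Q)) - (m*Q - k*P0) * (m*Q - k*P0)
     = (m - k*k) * (P0*P0 - m*(Q*Q)))%Z) by ring.
  rewrite E in Hid. lia.
Qed.

Lemma sq_zero (m P Q : Z) : (0 < m)%Z -> ~ is_square m ->
  (m * (Q * Q) = P * P)%Z -> Q = 0%Z.
Proof.
  intros hm hsq E.
  destruct (Z.lt_trichotomy Q 0) as [h|[h|h]]; [|exact h|].
  - exfalso. apply (descent m hm hsq (Z.to_nat (-Q)) P (-Q)%Z); [lia|lia|].
    rewrite <- E; ring.
  - exfalso. apply (descent m hm hsq (Z.to_nat Q) P Q); [lia|lia|exact E].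
Qed.

Lemma irr (m P Q : Z) : (0 < m)%Z -> ~ is_square m ->
  IZR P + IZR Q * sqrt (IZR m) = 0 -> P = 0%Z /\ Q = 0%Z.
Proof.
  intros hm hsq E.
  assert (Hs : sqrt (IZR m) * sqrt (IZR m) = IZR m)
    by (apply sqrt_sqrt; apply IZR_le; lia).
  assert (HQ : Q = 0%Z).
  { apply (sq_zero m P Q hm hsq). apply eq_IZR.
    rewrite !mult_IZR.
    assert (IZR P = - (IZR Q * sqrt (IZR m))) by lra.
    rewrite H. set (s := sqrt (IZR m)) in *. rewrite <- Hs. ring. }
  subst Q. split; [|reflexivity]. apply eq_IZR. simpl in E. lra.
Qed.

Lemma key (a b c m A B x y z w : Z) : (0 < m)%Z -> ~ is_square m ->
  (rep_eq a b c m A B x y z w <->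
   (a*m*y + b*z + c*m*w = A /\ a*x + b*w + c*z = B)%Z).
Proof.
  intros hm hsq.
  assert (Hs : sqrt (IZR m) * sqrt (IZR m) = IZR m)
    by (apply sqrt_sqrt; apply IZR_le; lia).
  unfold rep_eq. split.
  - intro E.
    destruct (irr m (a*m*y + b*z + c*m*w - A) (a*x + b*w + c*z - B) hm hsq) as [h1 h2].
    + rewrite !minus_IZR, !plus_IZR, !mult_IZR.
      set (s := sqrt (IZR m)) in *. rewrite <- Hs. lra.
    + lia.
  - intros [E1 E2]. subst A B.
    rewrite !plus_IZR, !mult_IZR.
    set (s := sqrt (IZR m)) in *. rewrite <- Hs. ring.
Qed.

Lemma small_mult (k d z' z : Z) : (0 < d)%Z -> (z' - z = k * d)%Z ->
  (0 <= z' < d)%Z -> (0 <= z < d)%Z -> k = 0%Z.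
Proof.
  intros hd E h1 h2.
  destruct (Z.lt_trichotomy k 0) as [h|[h|h]]; [|exact h|].
  - assert (k * d <= -1 * d)%Z by (apply Z.mul_le_mono_nonneg_r; lia). lia.
  - assert (1 * d <= k * d)%Z by (apply Z.mul_le_mono_nonneg_r; lia). lia.
Qed.

Theorem corollary2 (a b c m A B : Z)
  (ha : (0 < a)%Z) (hb : (0 < b)%Z) (hc : (0 < c)%Z) (hm : (0 < m)%Z)
  (hsq : ~ is_square m)
  (hgcd : Z.gcd (a * m) (b ^ 2 - c ^ 2 * m) = 1%Z) :
  exists! t : Z * Z * Z * Z,
    let '(x, y, z, w) := t in
    (0 <= z < a * m)%Z /\ (0 <= w < a)%Z /\ rep_eq a b c m A B x y z w.
Proof.
  set (D := (b ^ 2 - c ^ 2 * m)%Z) in *.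
  assert (HD : D = (b*b - c*c*m)%Z) by (unfold D; ring).
  destruct (Z.gcd_bezout (a*m) D 1%Z hgcd) as [u [v Hbez]].
  assert (ham : (0 < a*m)%Z) by lia.
  assert (Hga : Z.gcd a D = 1%Z).
  { apply Z.bezout_1_gcd. exists (u*m)%Z, v. rewrite <- Hbez. ring. }
  set (N1 := (v*(b*A - c*m*B))%Z). set (N2 := (v*(b*B - c*A))%Z).
  pose proof (Z.div_mod N1 (a*m) ltac:(lia)) as E1.
  pose proof (Z.div_mod N2 a ltac:(lia)) as E2.
  pose proof (Z.mod_pos_bound N1 (a*m) ham) as R1.
  pose proof (Z.mod_pos_bound N2 a ha) as R2.
  set (z := (N1 mod (a*m))%Z) in *. set (w := (N2 mod a)%Z) in *.
  set (q1 := (N1 / (a*m))%Z) in *. set (q2 := (N2 / a)%Z) in *.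
  exists ((B*u*m + b*q2 + c*m*q1)%Z, (A*u + b*q1 + c*q2)%Z, z, w).
  split.
  - split; [exact R1|]. split; [exact R2|].
    apply (proj2 (key a b c m A B _ _ _ _ hm hsq)).
    assert (Ez : z = (N1 - a*m*q1)%Z) by lia.
    assert (Ew : w = (N2 - a*q2)%Z) by lia.
    rewrite Ez, Ew. unfold N1, N2. split.
    + transitivity (A * (u*(a*m) + v*D))%Z; [rewrite HD; ring|].
      rewrite Hbez; ring.
    + transitivity (B * (u*(a*m) + v*D))%Z; [rewrite HD; ring|].
      rewrite Hbez; ring.
  - intros [[[x' y'] z'] w'] [Rz [Rw H]].
    apply (proj1 (key a b c m A B _ _ _ _ hm hsq)) in H. destruct H as [H1 H2].
    assert (G1 : (a*m*(A*u + b*q1 + c*q2) + b*z + c*m*w = A)%Z).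
    { assert (Ez : z = (N1 - a*m*q1)%Z) by lia.
      assert (Ew : w = (N2 - a*q2)%Z) by lia.
      rewrite Ez, Ew. unfold N1, N2.
      transitivity (A * (u*(a*m) + v*D))%Z; [rewrite HD; ring|].
      rewrite Hbez; ring. }
    assert (G2 : (a*(B*u*m + b*q2 + c*m*q1) + b*w + c*z = B)%Z).
    { assert (Ez : z = (N1 - a*m*q1)%Z) by lia.
      assert (Ew : w = (N2 - a*q2)%Z) by lia.
      rewrite Ez, Ew. unfold N1, N2.
      transitivity (B * (u*(a*m) + v*D))%Z; [rewrite HD; ring|].
      rewrite Hbez; ring. }
    set (X := (B*u*m + b*q2 + c*m*q1)%Z) in *.
    set (Y := (A*u + b*q1 + c*q2)%Z) in *.
    assert (Hz : z' = z).
    { assert (Hdv : (a*m | D * (z' - z))%Z).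
      { exists (c*(x' - X) - b*(y' - Y))%Z.
        rewrite HD.
        transitivity (b*((a*m*y' + b*z' + c*m*w') - (a*m*Y + b*z + c*m*w))
                      - c*m*((a*x' + b*w' + c*z') - (a*X + b*w + c*z))
                      + (c*(x' - X) - b*(y' - Y))*(a*m))%Z; [ring|].
        rewrite H1, H2, G1, G2. ring. }
      apply Z.gauss in Hdv; [|exact hgcd].
      destruct Hdv as [k Hk].
      pose proof (small_mult k (a*m) z' z ltac:(lia) Hk ltac:(lia) ltac:(lia)). lia. }
    subst z'.
    assert (Hw : w' = w).
    { assert (Hdv : (a | D * (w' - w))%Z).
      { exists (c*m*(y' - Y) - b*(x' - X))%Z.
        rewrite HD.
        transitivity (b*((a*x' + b*w' + c*z) - (a*X + b*w + c*z))
                      - c*((a*m*y' + b*z + c*m*w') - (a*m*Y + b*z + c*m*w))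
                      + (c*m*(y' - Y) - b*(x' - X))*a)%Z; [ring|].
        rewrite H1, H2, G1, G2. ring. }
      apply Z.gauss in Hdv; [|exact Hga].
      destruct Hdv as [k Hk].
      pose proof (small_mult k a w' w ltac:(lia) Hk ltac:(lia) ltac:(lia)). lia. }
    subst w'.
    assert (x' = X).
    { assert (a * (x' - X) = 0)%Z by lia.
      apply Z.mul_eq_0 in H; lia. }
    assert (y' = Y).
    { assert (a * m * (y' - Y) = 0)%Z by lia.
      apply Z.mul_eq_0 in H0; lia. } subst x' y'. reflexivity.
Qed.
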